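(* Let $\mathcal{CL}=\{\ell_1,\dots,\ell_n,C_1,\dots,C_k\}\subset\mathbb{P}^2_{\mathbb{C}}$ be a conic-line arrangement with $n\geq 3$ and $k\geq 3$ such that $t_{n+k}=0$. Then the Levi graph $H$ of $\mathcal{CL}$ contains an induced cycle of length $6$.
   Context: A conic-line arrangement $\mathcal{CL}=\{\ell_1,\dots,\ell_n,C_1,\dots,C_k\}$ is an arrangement of $n$ lines and $k$ smooth conics in $\mathbb{P}^2_{\mathbb{C}}$ having only ordinary singularities, i.e. every intersection point looks locally like $\{x^a=y^a\}$ for some integer $a\geq 2$. For $r\geq 2$, $t_r$ denotes the number of points of $\mathrm{Sing}(\mathcal{CL})$ lying on exactly $r$ curves of $\mathcal{CL}$; thus $t_{n+k}=0$ means no point lies on all curves. The Levi graph $H$ is the bipartite graph with one vertex for each point $p\in\mathrm{Sing}(\mathcal{CL})$, one vertex for each line and each conic, and an edge between the vertex of $p$ and the vertex of a curve iff $p$ lies on that curve. *)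

(* Defs.v *)
From HB Require Import structures.
From mathcomp Require Import all_boot all_order all_algebra.
From mathcomp Require Import reals complex.
Set Implicit Arguments. Unset Strict Implicit. Unset Printing Implicit Defensive.
Import Order.TTheory GRing.Theory Num.Theory.
Local Open Scope ring_scope.

Section ConicLine.
Variable F : fieldType.

(* A point of P^2(F): a nonzero vector whose first nonzero coordinate is 1
   (canonical representative of its class up to scaling). *)
Definition normalized (v : 'rV[F]_3) : bool :=
  (v 0 0 == 1) ||
  ((v 0 0 == 0) && ((v 0 1 == 1) || ((v 0 1 == 0) && (v 0 2%:R == 1)))).

Definition proj_point := {v : 'rV[F]_3 | normalized v}.

Definition bilin (u : 'rV[F]_3) (M : 'M[F]_3) (w : 'rV[F]_3) : F :=
  (u *m M *m w^T) 0 0.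

Variables n k : nat.

(* Curves of the arrangement: lines are indexed by inl i, conics by inr j. *)
Definition curve_idx := ('I_n + 'I_k)%type.

(* L i : coefficient vector of the linear form defining the line l_i;
   Q j : symmetric matrix of the quadratic form defining the conic C_j. *)
Definition on_curve (L : 'I_n -> 'rV[F]_3) (Q : 'I_k -> 'M[F]_3)
    (c : curve_idx) (p : proj_point) : bool :=
  match c with
  | inl i => (L i *m (val p)^T) 0 0 == 0
  | inr j => bilin (val p) (Q j) (val p) == 0
  end.

(* Gradient of the defining polynomial of curve c at p (defines the tangent
   line of the smooth curve c at a point p on it). *)
Definition grad (L : 'I_n -> 'rV[F]_3) (Q : 'I_k -> 'M[F]_3)
    (c : curve_idx) (p : proj_point) : 'rV[F]_3 :=
  match c with
  | inl i => L i
  | inr j => val p *m (Q j + (Q j)^T)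
  end.

(* Conic-line arrangement with only ordinary singularities:
   - each l_i is a line (nonzero linear form), each C_j a smooth conic
     (symmetric nondegenerate quadratic form);
   - the n + k curves are pairwise distinct (as subsets of P^2);
   - every intersection point is ordinary: any two distinct curves through a
     point p have distinct tangent lines at p (pairwise transversal smooth
     branches, i.e. locally x^a = y^a). *)
Definition conic_line_arrangement (L : 'I_n -> 'rV[F]_3) (Q : 'I_k -> 'M[F]_3)
    : Prop :=
  [/\ forall i, L i != 0,
      forall j, (Q j)^T = Q j /\ \det (Q j) != 0,
      forall c d : curve_idx, c != d -> ~ (on_curve L Q c =1 on_curve L Q d)
    & forall (p : proj_point) (c d : curve_idx), c != d ->
        on_curve L Q c p -> on_curve L Q d p ->
        ~ (exists a : F, grad L Q c p = a *: grad L Q d p)].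

Definition mult (L : 'I_n -> 'rV[F]_3) (Q : 'I_k -> 'M[F]_3) (p : proj_point)
  : nat := #|[pred c : curve_idx | on_curve L Q c p]|.

Definition sing_pt L Q (p : proj_point) : bool := (2 <= mult L Q p)%N.

(* t_r = 0 : no point of Sing(CL) lies on exactly r curves *)
Definition t_zero L Q (r : nat) : Prop :=
  forall p : proj_point, sing_pt L Q p -> (mult L Q p != r)%N.

Definition levi_vtype := (proj_point + curve_idx)%type.

Definition levi_vertex L Q (v : levi_vtype) : bool :=
  match v with inl p => sing_pt L Q p | inr _ => true end.

Definition levi_adj L Q (v w : levi_vtype) : bool :=
  match v, w with
  | inl p, inr c => on_curve L Q c p
  | inr c, inl p => on_curve L Q c p
  | _, _ => false
  end.

End ConicLine.

Definition has_induced_cycle (T : Type) (V : T -> bool) (adj : T -> T -> bool)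
    (m : nat) : Prop :=
  exists f : 'I_m -> T,
    [/\ injective f, forall i, V (f i)
      & forall i j : 'I_m,
          adj (f i) (f j) <-> (j = (i.+1 %% m)%N :> nat \/ i = (j.+1 %% m)%N :> nat)].

(* Main.v *)
Require Import Defs.
From HB Require Import structures.
From mathcomp Require Import all_boot all_order all_algebra.
From mathcomp Require Import reals complex.
From mathcomp Require Import ring.
Set Implicit Arguments. Unset Strict Implicit. Unset Printing Implicit Defensive.
Import Order.TTheory GRing.Theory Num.Theory.
Local Open Scope ring_scope.

Section Basics.
Variable F : fieldType.

Lemma sum3 (f : 'I_3 -> F) : \sum_(j < 3) f j = f 0 + f 1 + f 2%:R.
Proof.
rewrite !big_ord_recl big_ord0 addr0 addrA.
by congr (f _ + f _ + f _); apply/val_inj.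
Qed.

Lemma dotE (L u : 'rV[F]_3) : (L *m u^T) 0 0 =
  L 0 0 * u 0 0 + L 0 1 * u 0 1 + L 0 2%:R * u 0 2%:R.
Proof. by rewrite mxE sum3 !mxE. Qed.

Lemma bilinE (u : 'rV[F]_3) M w : bilin u M w =
  (u 0 0 * M 0 0 + u 0 1 * M 1 0 + u 0 2%:R * M 2%:R 0) * w 0 0 +
  (u 0 0 * M 0 1 + u 0 1 * M 1 1 + u 0 2%:R * M 2%:R 1) * w 0 1 +
  (u 0 0 * M 0 2%:R + u 0 1 * M 1 2%:R + u 0 2%:R * M 2%:R 2%:R) * w 0 2%:R.
Proof. by rewrite /bilin mxE sum3 !mxE !sum3. Qed.

Definition mk3 (a b c : F) : 'rV[F]_3 :=
  \row_(j < 3) (if val j == 0%N then a else if val j == 1%N then b else c).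

Lemma mk3E0 a b c : mk3 a b c 0 0 = a. Proof. by rewrite mxE. Qed.
Lemma mk3E1 a b c : mk3 a b c 0 1 = b. Proof. by rewrite mxE. Qed.
Lemma mk3E2 a b c : mk3 a b c 0 2%:R = c. Proof. by rewrite mxE. Qed.

Lemma row3P (u v : 'rV[F]_3) : u 0 0 = v 0 0 -> u 0 1 = v 0 1 ->
  u 0 2%:R = v 0 2%:R -> u = v.
Proof.
move=> h0 h1 h2; apply/rowP => j.
case: j => [[|[|[|//]]] Hj].
- by rewrite (_ : Ordinal Hj = 0) //; apply/val_inj.
- by rewrite (_ : Ordinal Hj = 1) //; apply/val_inj.
- by rewrite (_ : Ordinal Hj = 2%:R) //; apply/val_inj.
Qed.
End Basics.
From HB Require Import structures.
From mathcomp Require Import all_boot all_order all_algebra.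
From mathcomp Require Import ring.
Set Implicit Arguments. Unset Strict Implicit. Unset Printing Implicit Defensive.
Import Order.TTheory GRing.Theory Num.Theory.
Local Open Scope ring_scope.

Section Scal.
Variable F : fieldType.

Definition crossz (a0 a1 a2 b0 b1 b2 : F) : Prop :=
  [/\ a1*b2 - a2*b1 = 0, a2*b0 - a0*b2 = 0 & a0*b1 - a1*b0 = 0].

Lemma crossz_rot (a0 a1 a2 b0 b1 b2 : F) :
  crossz a0 a1 a2 b0 b1 b2 <-> crossz a1 a2 a0 b1 b2 b0.
Proof. by split=> -[*]; split. Qed.

Lemma mulf0_cancel (c x : F) : c != 0 -> c * x = 0 -> x = 0.
Proof. by move=> hc /eqP; rewrite mulf_eq0 (negbTE hc) => /eqP. Qed.

Lemma par0 u0 u1 u2 v0 v1 v2 w0 w1 w2 : w0 != 0 ->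
  crossz u0 u1 u2 w0 w1 w2 -> crossz v0 v1 v2 w0 w1 w2 ->
  crossz u0 u1 u2 v0 v1 v2.
Proof.
move=> hw [a1 a2 a3] [b1 b2 b3].
have hY : u0*v1 - u1*v0 = 0.
  apply: (mulf0_cancel hw).
  have -> : w0 * (u0*v1 - u1*v0) =
     - u0 * (v0*w1 - v1*w0) + v0*(u0*w1 - u1*w0) by ring.
  by rewrite a3 b3; ring.
split=> //.
- apply: (mulf0_cancel hw).
  have -> : w0 * (u1*v2 - u2*v1) =
    u1*(v2*w0 - v0*w2) - v1*(u2*w0 - u0*w2) - w2*(u0*v1 - u1*v0) by ring.
  by rewrite a2 b2 hY; ring.
- apply: (mulf0_cancel hw).
  have -> : w0 * (u2*v0 - u0*v2) =
    v0*(u2*w0 - u0*w2) - u0*(v2*w0 - v0*w2) by ring.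
  by rewrite a2 b2; ring.
Qed.

Lemma par (u0 u1 u2 v0 v1 v2 w0 w1 w2 : F) :
  [\/ w0 != 0, w1 != 0 | w2 != 0] ->
  crossz u0 u1 u2 w0 w1 w2 -> crossz v0 v1 v2 w0 w1 w2 ->
  crossz u0 u1 u2 v0 v1 v2.
Proof.
case=> hw hu hv.
- exact: par0 hw hu hv.
- move/crossz_rot: hu => hu; move/crossz_rot: hv => hv.
  apply (proj2 (crossz_rot u0 u1 u2 v0 v1 v2)).
  exact: (par0 hw hu hv).
- move/crossz_rot/crossz_rot: hu => hu; move/crossz_rot/crossz_rot: hv => hv.
  apply (proj2 (crossz_rot u0 u1 u2 v0 v1 v2)).
  apply (proj2 (crossz_rot u1 u2 u0 v1 v2 v0)).
  exact: (par0 hw hu hv).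
Qed.

Definition nz (u0 u1 u2 : F) : bool :=
  (u0 == 1) || ((u0 == 0) && ((u1 == 1) || ((u1 == 0) && (u2 == 1)))).

Lemma nz_eq u0 u1 u2 v0 v1 v2 : nz u0 u1 u2 -> nz v0 v1 v2 ->
  crossz u0 u1 u2 v0 v1 v2 -> [/\ u0 = v0, u1 = v1 & u2 = v2].
Proof.
rewrite /nz.
case/orP=> [/eqP->|/andP[/eqP-> /orP[/eqP->|/andP[/eqP-> /eqP->]]]];
case/orP=> [/eqP->|/andP[/eqP-> /orP[/eqP->|/andP[/eqP-> /eqP->]]]];
case; rewrite ?(mul1r, mulr1, mul0r, mulr0, subr0, sub0r, add0r, addr0) => h1 h2 h3;
move: h1 h2 h3; rewrite ?(oppr_eq0, subr_eq0, oner_eq0) => h1 h2 h3;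
try (by move/eqP: h1; rewrite ?oppr_eq0 oner_eq0);
try (by move/eqP: h2; rewrite ?oppr_eq0 oner_eq0);
try (by move/eqP: h3; rewrite ?oppr_eq0 oner_eq0).
all: try (split => //; apply/eqP; rewrite -subr_eq0; rewrite ?h1 ?h2 ?h3 //).
all: first [by rewrite -opprB h3 oppr0 | by rewrite -opprB h1 oppr0].
Qed.

End Scal.
From HB Require Import structures.
From mathcomp Require Import all_boot all_order all_algebra.
From mathcomp Require Import ring.
Set Implicit Arguments. Unset Strict Implicit. Unset Printing Implicit Defensive.
Import Order.TTheory GRing.Theory Num.Theory.
Local Open Scope ring_scope.

Section Scal2.
Variable F : fieldType.

Lemma prop0 (L0 L1 L2 M0 M1 M2 : F) : M0 != 0 -> crossz L0 L1 L2 M0 M1 M2 ->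
  exists a, [/\ L0 = a * M0, L1 = a * M1 & L2 = a * M2].
Proof.
move=> hM [_ h2 h3]; exists (L0 / M0); split.
- by field.
- apply/eqP; rewrite -subr_eq0.
  have -> : L1 - L0 / M0 * M1 = - (L0 * M1 - L1 * M0) / M0 by field.
  by rewrite h3 oppr0 mul0r.
- apply/eqP; rewrite -subr_eq0.
  have -> : L2 - L0 / M0 * M2 = (L2 * M0 - L0 * M2) / M0 by field.
  by rewrite h2 mul0r.
Qed.

Lemma prop (L0 L1 L2 M0 M1 M2 : F) : [\/ M0 != 0, M1 != 0 | M2 != 0] ->
  crossz L0 L1 L2 M0 M1 M2 ->
  exists a, [/\ L0 = a * M0, L1 = a * M1 & L2 = a * M2].
Proof.
case=> hM h.
- exact: prop0 hM h.
- move/crossz_rot: h => h; have [a [? ? ?]] := prop0 hM h; by exists a.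
- move/crossz_rot/crossz_rot: h => h; have [a [? ? ?]] := prop0 hM h; by exists a.
Qed.

Lemma triple (u0 u1 u2 L0 L1 L2 M0 M1 M2 : F) :
  L0 * u0 + L1 * u1 + L2 * u2 = 0 -> M0 * u0 + M1 * u1 + M2 * u2 = 0 ->
  crossz u0 u1 u2 (L1*M2 - L2*M1) (L2*M0 - L0*M2) (L0*M1 - L1*M0).
Proof.
move=> hL hM; split.
- have -> : u1 * (L0 * M1 - L1 * M0) - u2 * (L2 * M0 - L0 * M2) =
     L0 * (M0 * u0 + M1 * u1 + M2 * u2) - M0 * (L0 * u0 + L1 * u1 + L2 * u2) by ring.
  by rewrite hL hM; ring.
- have -> : u2 * (L1 * M2 - L2 * M1) - u0 * (L0 * M1 - L1 * M0) =
     L1 * (M0 * u0 + M1 * u1 + M2 * u2) - M1 * (L0 * u0 + L1 * u1 + L2 * u2) by ring.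
  by rewrite hL hM; ring.
- have -> : u0 * (L2 * M0 - L0 * M2) - u1 * (L1 * M2 - L2 * M1) =
     L2 * (M0 * u0 + M1 * u1 + M2 * u2) - M2 * (L0 * u0 + L1 * u1 + L2 * u2) by ring.
  by rewrite hL hM; ring.
Qed.

Lemma lineparam (L0 L1 L2 : F) : [\/ L0 != 0, L1 != 0 | L2 != 0] ->
  exists a0 a1 a2 b0 b1 b2 : F,
    [/\ L0 * a0 + L1 * a1 + L2 * a2 = 0, L0 * b0 + L1 * b1 + L2 * b2 = 0 &
      forall s t : F, (s != 0) || (t != 0) ->
        [\/ s * a0 + t * b0 != 0, s * a1 + t * b1 != 0 | s * a2 + t * b2 != 0]].
Proof.
have nz2 (x y : F) : x != 0 -> y != 0 -> x * y != 0 by move=> hx hy; rewrite mulf_neq0.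
case: (eqVneq L0 0) => [h0|h0] hL.
- case: (eqVneq L1 0) => [h1|h1].
  + have h2 : L2 != 0 by case: hL; rewrite ?h0 ?h1 ?eqxx.
    exists 1, 0, 0, 0, 1, 0; split; first by rewrite h0 h1; ring.
      by rewrite h0 h1; ring.
    move=> s t /orP[hs|ht]; [apply: Or31 | apply: Or32];
      by rewrite ?mulr1 ?mulr0 ?addr0 ?add0r.
  + exists 1, 0, 0, 0, (- L2), L1; split; first by rewrite h0; ring.
      by ring.
    move=> s t /orP[hs|ht]; [apply: Or31 | apply: Or33];
      by rewrite ?mulr1 ?mulr0 ?addr0 ?add0r ?mulf_neq0.
- exists (- L1), L0, 0, (- L2), 0, L0; split; try ring.
  move=> s t /orP[hs|ht]; [apply: Or32 | apply: Or33];
    by rewrite ?mulr1 ?mulr0 ?addr0 ?add0r ?mulf_neq0.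
Qed.

End Scal2.

Section Closed.
Variable F : closedFieldType.

Lemma quad_root (al be ga : F) : exists s t : F,
  (s != 0) || (t != 0) /\ al * s ^+ 2 + be * s * t + ga * t ^+ 2 = 0.
Proof.
case: (eqVneq al 0) => [->|hal].
  by exists 1, 0; rewrite oner_neq0; split => //; ring.
have [x hx] := @GRing.solve_monicpoly F 2 (nth 0 [:: - ga / al; - be / al]) isT.
exists x, 1; split; first by rewrite oner_neq0 orbT.
move: hx; rewrite !big_ord_recl big_ord0 /= => hx.
have -> : al * x ^+ 2 + be * x * 1 + ga * 1 ^+ 2 =
   al * (x ^+ 2 - (- ga / al * x ^+ 0 + (- be / al * x ^+ 1 + 0))) by field.
by rewrite hx subrr mulr0.
Qed.
End Closed.
From HB Require Import structures.
From mathcomp Require Import all_boot all_order all_algebra.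
From mathcomp Require Import ring.
Set Implicit Arguments. Unset Strict Implicit. Unset Printing Implicit Defensive.
Import Order.TTheory GRing.Theory Num.Theory.
Local Open Scope ring_scope.

Section Geo.
Variable F : closedFieldType.

Lemma nz3 (v : 'rV[F]_3) : v != 0 -> [\/ v 0 0 != 0, v 0 1 != 0 | v 0 2%:R != 0].
Proof.
move=> hv; case: (eqVneq (v 0 0) 0) => [h0|]; last by constructor.
case: (eqVneq (v 0 1) 0) => [h1|]; last by constructor.
case: (eqVneq (v 0 2%:R) 0) => [h2|]; last by constructor.
have hv0 : v = 0 by apply: row3P; rewrite ?mxE.
by rewrite hv0 eqxx in hv.
Qed.

Lemma exists_pt3 (x y z : F) : [\/ x != 0, y != 0 | z != 0] ->
  exists p : proj_point F, exists c : F, c != 0 /\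
    [/\ val p 0 0 = c * x, val p 0 1 = c * y & val p 0 2%:R = c * z].
Proof.
have key (c : F) : c != 0 -> normalized (c *: mk3 x y z) ->
  exists p : proj_point F, exists c : F, c != 0 /\
    [/\ val p 0 0 = c * x, val p 0 1 = c * y & val p 0 2%:R = c * z].
  move=> hc hn; exists (exist (fun v => normalized v) _ hn), c; split => //=.
  by rewrite !mxE.
case: (eqVneq x 0) => [hx|hx] h.
- case: (eqVneq y 0) => [hy|hy].
  + have hz : z != 0 by case: h; rewrite ?hx ?hy ?eqxx.
    apply: (key z^-1); first by rewrite invr_eq0.
    by rewrite /normalized !mxE /= hx hy !mulr0 eqxx mulVf // eqxx !orbT.
  + apply: (key y^-1); first by rewrite invr_eq0.
    by rewrite /normalized !mxE /= hx !mulr0 eqxx mulVf // eqxx !orbT.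
- apply: (key x^-1); first by rewrite invr_eq0.
  by rewrite /normalized !mxE /= mulVf // eqxx.
Qed.


Variables (n k : nat) (L : 'I_n -> 'rV[F]_3) (Q : 'I_k -> 'M[F]_3).
Hypothesis HA : conic_line_arrangement L Q.

Let on := on_curve L Q.

Lemma onL i (p : proj_point F) : on (inl i) p =
  (L i 0 0 * val p 0 0 + L i 0 1 * val p 0 1 + L i 0 2%:R * val p 0 2%:R == 0).
Proof. by rewrite /on /= dotE. Qed.

Lemma Lnz i : [\/ L i 0 0 != 0, L i 0 1 != 0 | L i 0 2%:R != 0].
Proof. case: HA => hL _ _ _; exact: nz3. Qed.

Lemma nonprop i i' : i != i' -> ~ exists a, L i = a *: L i'.
Proof.
move=> hii [a ha]; case: HA => hL _ hd _.
apply: (hd (inl i) (inl i')); first by apply/eqP => -[] /eqP; rewrite (negbTE hii).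
move=> p; rewrite /= ha !dotE !mxE.
have ha0 : a != 0 by apply: contraNneq (hL i) => ha0; rewrite ha ha0 scale0r.
have -> : a * L i' 0 0 * val p 0 0 + a * L i' 0 1 * val p 0 1 + a * L i' 0 2%:R * val p 0 2%:R
  = a * (L i' 0 0 * val p 0 0 + L i' 0 1 * val p 0 1 + L i' 0 2%:R * val p 0 2%:R) by ring.
by rewrite mulf_eq0 (negbTE ha0).
Qed.

Definition wx i i' := (L i 0 1 * L i' 0 2%:R - L i 0 2%:R * L i' 0 1).
Definition wy i i' := (L i 0 2%:R * L i' 0 0 - L i 0 0 * L i' 0 2%:R).
Definition wz i i' := (L i 0 0 * L i' 0 1 - L i 0 1 * L i' 0 0).

Lemma wnz i i' : i != i' -> [\/ wx i i' != 0, wy i i' != 0 | wz i i' != 0].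
Proof.
move=> hii.
case: (eqVneq (wx i i') 0) => [h0|]; last by constructor.
case: (eqVneq (wy i i') 0) => [h1|]; last by constructor.
case: (eqVneq (wz i i') 0) => [h2|]; last by constructor.
have [a [a0 a1 a2]] := prop (Lnz i') (And3 h0 h1 h2).
case: (nonprop hii); exists a; apply: row3P; by rewrite mxE.
Qed.

Lemma meet_ll i i' : i != i' -> exists p, on (inl i) p /\ on (inl i') p.
Proof.
move=> hii; have [p [c [hc [h0 h1 h2]]]] := exists_pt3 (wnz hii).
exists p; rewrite !onL h0 h1 h2 /wx /wy /wz; split; apply/eqP; ring.
Qed.

Lemma uniq_ll i i' p q : i != i' -> on (inl i) p -> on (inl i') p ->
  on (inl i) q -> on (inl i') q -> p = q.
Proof.
move=> hii; rewrite !onL => /eqP hp1 /eqP hp2 /eqP hq1 /eqP hq2.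
have cp := triple hp1 hp2; have cq := triple hq1 hq2.
have cpq := par (wnz hii) cp cq.
have [e0 e1 e2] := nz_eq (valP p) (valP q) cpq.
by apply: val_inj; apply: row3P.
Qed.

Lemma meet_lc i j : exists p, on (inl i) p /\ on (inr j) p.
Proof.
have [a0 [a1 [a2 [b0 [b1 [b2 [ha hb hind]]]]]]] := lineparam (Lnz i).
set A := mk3 a0 a1 a2; set B := mk3 b0 b1 b2.
have [s [t [hst hq]]] := quad_root (bilin A (Q j) A)
   (bilin A (Q j) B + bilin B (Q j) A) (bilin B (Q j) B).
have [p [c [hc [h0 h1 h2]]]] := exists_pt3 (hind s t hst).
exists p; split.
- rewrite onL h0 h1 h2; apply/eqP.
  have -> : L i 0 0 * (c * (s * a0 + t * b0)) + L i 0 1 * (c * (s * a1 + t * b1)) +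
    L i 0 2%:R * (c * (s * a2 + t * b2)) =
    c * (s * (L i 0 0 * a0 + L i 0 1 * a1 + L i 0 2%:R * a2) +
         t * (L i 0 0 * b0 + L i 0 1 * b1 + L i 0 2%:R * b2)) by ring.
  by rewrite ha hb; ring.
- rewrite /on /=; apply/eqP.
  have -> : bilin (val p) (Q j) (val p) = c ^+ 2 *
     (bilin A (Q j) A * s ^+ 2 + (bilin A (Q j) B + bilin B (Q j) A) * s * t +
      bilin B (Q j) B * t ^+ 2).
    by rewrite !bilinE h0 h1 h2 /A /B !mk3E0 !mk3E1 !mk3E2; ring.
  by rewrite hq mulr0.
Qed.

End Geo.
From HB Require Import structures.
From mathcomp Require Import all_boot all_order all_algebra.
Set Implicit Arguments. Unset Strict Implicit. Unset Printing Implicit Defensive.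
Import Order.TTheory GRing.Theory Num.Theory.
Local Open Scope ring_scope.

Section Cyc.
Variable F : fieldType.
Variables (n k : nat) (L : 'I_n -> 'rV[F]_3) (Q : 'I_k -> 'M[F]_3).

Lemma sing_of (a b : curve_idx n k) p : on_curve L Q a p -> on_curve L Q b p ->
  a != b -> sing_pt L Q p.
Proof.
move=> ha hb hab; rewrite /sing_pt /mult; apply/card_gt1P.
by exists a, b; rewrite !inE ha hb.
Qed.

Lemma cycle6 (x y z : proj_point F) (a b c : curve_idx n k) :
  a != b -> b != c -> a != c ->
  on_curve L Q a x -> on_curve L Q c x -> ~~ on_curve L Q b x ->
  on_curve L Q a y -> on_curve L Q b y -> ~~ on_curve L Q c y ->
  on_curve L Q b z -> on_curve L Q c z -> ~~ on_curve L Q a z ->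
  has_induced_cycle (levi_vertex L Q) (levi_adj L Q) 6.
Proof.
move=> hab hbc hac hax hcx hbx hay hby hcy hbz hcz haz.
have hxy : x != y by apply: contraNneq hbx => ->.
have hxz : x != z by apply: contraNneq hbx => ->.
have hyz : y != z by apply: contraNneq hcy => ->.
set s : seq (levi_vtype F n k) := [:: inl x; inr a; inl y; inr b; inl z; inr c].
have us : uniq s.
  have Ell (u v : proj_point F) : (inl u == inl v :> levi_vtype F n k) = (u == v) by [].
  have Err (u v : curve_idx n k) : (inr u == inr v :> levi_vtype F n k) = (u == v) by [].
  have Elr (u : proj_point F) (v : curve_idx n k) : (inl u == inr v :> levi_vtype F n k) = false by [].
  rewrite /s /= !inE !Ell !Err !Elr (negbTE hxy) (negbTE hxz) (negbTE hyz).
  by rewrite (negbTE hab) (negbTE hbc) (negbTE hac).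
exists (fun i : 'I_6 => nth (inl x) s i); split.
- move=> i j /eqP; rewrite nth_uniq // => /eqP; exact: val_inj.
- move=> [[|[|[|[|[|[|?]]]]]] ?] //=.
  + exact: sing_of hax hcx hac.
  + exact: sing_of hay hby hab.
  + exact: sing_of hbz hcz hbc.
- move=> [[|[|[|[|[|[|?]]]]]] ?] [[|[|[|[|[|[|?]]]]]] ?] //=;
  rewrite ?hax ?hcx ?(negbTE hbx) ?hay ?hby ?(negbTE hcy) ?hbz ?hcz ?(negbTE haz).
  all: split; first (move=> H; first [by left | by right | by []]).
  all: first [by [] | by case => /eqP].
Qed.
End Cyc.
From HB Require Import structures.
From mathcomp Require Import all_boot all_order all_algebra.
From mathcomp Require Import reals complex.
Local Open Scope ring_scope.

Lemma main_gen (F : closedFieldType) (n k : nat)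
    (L : 'I_n -> 'rV[F]_3) (Q : 'I_k -> 'M[F]_3) :
  (3 <= n)%N -> (3 <= k)%N ->
  conic_line_arrangement L Q ->
  t_zero L Q (n + k) ->
  has_induced_cycle (levi_vertex L Q) (levi_adj L Q) 6.
Proof.
move=> hn hk HA Ht.
have h0 : (0 < n)%N by apply: leq_trans hn.
have h1 : (1 < n)%N by apply: leq_trans hn.
set i0 := Ordinal h0; set i1 := Ordinal h1.
have hi01 : i0 != i1 by [].
have [p [hp0 hp1]] := meet_ll HA hi01.
have hin : (inl i0 : curve_idx n k) != inl i1 by [].
have hm := Ht p (sing_of hp0 hp1 hin).
have : ~~ [forall c, on_curve L Q c p].
  apply: contra hm => /forallP hall.
  have -> : mult L Q p = #|{: curve_idx n k}|.
    by apply: eq_card => c; rewrite !inE hall.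
  by rewrite card_sum !card_ord.
rewrite negb_forall => /existsP [[i|j] hc].
- have hi0 : i0 != i by apply: contraNneq hc => <-.
  have hi1 : i1 != i by apply: contraNneq hc => <-.
  have [y [hy0 hyi]] := meet_ll HA hi0.
  have [z [hz1 hzi]] := meet_ll HA hi1.
  apply: (@cycle6 _ _ _ L Q p y z (inl i0) (inl i) (inl i1)) => //.
  + by apply: contraNneq hc => -[->].
  + by apply: contra hc => hy1; rewrite -(uniq_ll HA hi01 hy0 hy1 hp0 hp1).
  + by apply: contra hc => hz0; rewrite -(uniq_ll HA hi01 hz0 hz1 hp0 hp1).
- have [y [hy0 hyj]] := meet_lc HA i0 j.
  have [z [hz1 hzj]] := meet_lc HA i1 j.
  apply: (@cycle6 _ _ _ L Q p y z (inl i0) (inr j) (inl i1)) => //.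
  + by apply: contra hc => hy1; rewrite -(uniq_ll HA hi01 hy0 hy1 hp0 hp1).
  + by apply: contra hc => hz0; rewrite -(uniq_ll HA hi01 hz0 hz1 hp0 hp1).
Qed.

Theorem theorem5p5 (R : realType) (n k : nat)
    (L : 'I_n -> 'rV[R[i]]_3) (Q : 'I_k -> 'M[R[i]]_3) :
  (3 <= n)%N -> (3 <= k)%N ->
  conic_line_arrangement L Q ->
  t_zero L Q (n + k) ->
  has_induced_cycle (levi_vertex L Q) (levi_adj L Q) 6.
Proof. exact: (@main_gen (R[i])). Qed.
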